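(* Let $f$ be a strategy-proof SCF and $G$ a gradual mechanism implementing $f$. If $G$ is indifference reaction-proof, then $G$ is incentive compatible.
   Context: Setting. $N$ finite set of agents, $X$ finite set of outcomes, finite type spaces $\Theta_i$, each type $\theta_i$ inducing a complete transitive preference $R(\theta_i)$ on $X$; $\Theta=\prod_i\Theta_i$. An SCF $f:\Theta\to X$ is strategy-proof if $f(\theta_i,\theta_{-i})\,R(\theta_i)\,f(\theta_i',\theta_{-i})$ for all $i,\theta_i,\theta_i',\theta_{-i}$. Dynamic game forms. A dynamic game form with perfect recall consists of a finite tree $\bar H$ of histories (finite sequences of action profiles) containing the empty initial history $\varnothing$, closed under prefixes ($\preceq$ prefix order, $\prec$ strict); terminal histories $Z$, non-terminal $H$; at each $h\in H$ a nonempty set $\mathbb P(h)$ of agents move simultaneously with available actions $A_i(h)$, all action profiles leading to successors; $\mathbb P(\varnothing)=N$; each agent's decision nodes $H_i$ are partitioned into information sets $\boldsymbol H_i$, with available actions constant on information sets and perfect recall; $\mathcal X:Z\to X$. For information sets of $i$, $\boldsymbol h_i\prec\bar{\boldsymbol h}_i$ if $h\prec\bar h$ for some $h\in\boldsymbol h_i,\bar h\in\bar{\boldsymbol h}_i$; $\bar{\boldsymbol h}_i$ is an immediate successor of $\boldsymbol h_i$ if $\boldsymbol h_i\prec\bar{\boldsymbol h}_i$ and no information set of $i$ lies strictly between them. Strategies choose an available action at each information set; $s_M$ denotes a profile for agents in $M$ ($s_{-i}$, $s_{-i,j}$ for agents other than $i$, other than $i,j$); a complete profile $s$ determines $z(s)$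 and $\mathcal X(s)=\mathcal X(z(s))$. Gradual mechanisms. A GM implementing $f$ is such a game form in which (1) actions of $i$ are nonempty subsets of $\Theta_i$; (2) at every $h\in H_i$ the available actions of $i$ are pairwise disjoint with union $\Theta_i(h)$, where for any history $h$, $\Theta_i(h)$ is the last action of $i$ in $h$ ($\Theta_i$ if $i$ has not acted); (3) $\mathcal X(z)=f(\theta)$ for all $z\in Z$, $\theta\in\Theta(z)=\prod_i\Theta_i(z)$. For a history $h$, $\Theta(h)=\prod_i\Theta_i(h)$; for an information set, $\Theta_i(\boldsymbol h_i)=\Theta_i(h)$ for $h\in\boldsymbol h_i$. Consistency. A history $h$ is consistent with $s_M$ ($M\subsetneq N$) if $h\preceq z(s_M,s_{N\setminus M})$ for some $s_{N\setminus M}$. Incentive compatibility. $s_i$ is unconditional for $\theta_i$ if $\theta_i\in s_i(h)$ for every $h\in H_i$ with $\theta_i\in\Theta_i(h)$ (denoted $s_{\theta_i}$). The GM is incentive compatible if $\mathcal X(s_{\theta_i},s_{-i})\,R(\theta_i)\,\mathcal X(s_i,s_{-i})$ for all $i,\theta_i$, unconditional $s_{\theta_i}$, $s_i$, $s_{-i}$. Indifference reaction-proofness. A GM $G$ implementing $f$ is indifference reaction-proof if for any two distinct agents $i,j\in N$, any pair of distinct information sets $\boldsymbol h_i^1,\boldsymbol h_i^2$ of $i$ that are immediate successors of a common information set $\boldsymbol h_i$ of $i$ with $\Theta_i(\boldsymbol h_i^1)=\Theta_i(\boldsymbol h_i^2)$, and any histories $h^1\in\boldsymbol h_i^1$, $h^2\in\boldsymbol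 h_i^2$ that are both consistent with a common strategy profile $s_{-i,j}$, there exists $h^k\in\{h^1,h^2\}$ such that $f(\theta)\,R(\theta_j^* )\,f(\theta')$ for all $\theta,\theta'\in\Theta(h^k)$ and all $\theta_j^*\in\Theta_j$. *)

(* Defs.v *)
From mathcomp Require Import all_boot.
From Stdlib Require List.

Set Implicit Arguments.
Unset Strict Implicit.
Unset Printing Implicit Defensive.

Section GradualMechanisms.

Variables (N : finType) (Theta : N -> finType) (X : finType).

Definition tprofile := forall i : N, Theta i.

(* An action profile at a node: Some a_i for movers (a_i a subset of Theta_i),
   None for agents who do not move. A history is a finite sequence of those. *)
Definition aprof := forall i : N, option {set Theta i}.
Definition history := seq aprof.
Definition aprof0 : aprof := fun _ => None.

Definition prefix (h z : history) : Prop := exists t, z = h ++ t.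
Definition sprefix (h z : history) : Prop := exists t, t <> [::] /\ z = h ++ t.

(* Theta_i(h) : last action of i in h, or Theta_i if i has not acted *)
Definition theta_i (i : N) (h : history) : {set Theta i} :=
  foldl (fun acc (a : aprof) => if a i is Some x then x else acc) setT h.

Definition in_theta (h : history) (th : tprofile) : Prop :=
  forall i, th i \in theta_i i h.

Record game := Game {
  hist : history -> Prop;
  movers : history -> {set N};
  acts : forall i : N, history -> {set {set Theta i}};
  info : forall i : N, history -> history -> Prop;      (* same information set of i *)
  outcome : history -> X
}.

Variable g : game.

Definition nonterminal (h : history) : Prop :=
  hist g h /\ exists a, hist g (rcons h a).
Definition terminal (h : history) : Prop :=
  hist g h /\ ~ exists a, hist g (rcons h a).
Definition decnode (i : N) (h : history) : Prop :=
  nonterminal h /\ i \in movers g h.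

Definition experience (i : N) (h : history) : seq (history * option {set Theta i}) :=
  map (fun k => (take k h, nth aprof0 h k i))
      (filter (fun k => i \in movers g (take k h)) (iota 0 (size h))).

Record is_game_form : Prop := {
  gf_root : hist g [::];
  gf_prefix_closed : forall h a, hist g (rcons h a) -> hist g h;
  gf_finite_depth : exists n, forall h, hist g h -> size h <= n;
  gf_root_movers : movers g [::] = setT;
  gf_movers_nonempty : forall h, nonterminal h -> movers g h != set0;
  gf_successors : forall h a, nonterminal h ->
    (hist g (rcons h a) <->
     forall i, if i \in movers g h then exists2 x, a i = Some x & x \in acts g i h
               else a i = None);
  gf_info_dom : forall i h h', info g i h h' -> decnode i h /\ decnode i h';
  gf_info_refl : forall i h, decnode i h -> info g i h h;
  gf_info_sym : forall i h h', info g i h h' -> info g i h' h;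
  gf_info_trans : forall i h h' h'', info g i h h' -> info g i h' h'' -> info g i h h'';
  gf_info_acts : forall i h h', info g i h h' -> acts g i h = acts g i h';
  gf_perfect_recall : forall i h h', info g i h h' ->
    List.Forall2 (fun p q => info g i p.1 q.1 /\ p.2 = q.2)
                 (experience i h) (experience i h')
}.

Record is_GM (f : tprofile -> X) : Prop := {
  gm_game_form : is_game_form;
  gm_acts_nonempty : forall i h x, decnode i h -> x \in acts g i h -> x != set0;
  gm_acts_disjoint : forall i h x y, decnode i h -> x \in acts g i h -> y \in acts g i h ->
    x != y -> [disjoint x & y];
  gm_acts_cover : forall i h, decnode i h -> \bigcup_(x in acts g i h) x = theta_i i h;
  gm_implements : forall z th, terminal z -> in_theta z th -> outcome g z = f th
}.

Definition sprofile := forall i : N, history -> {set Theta i}.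

Definition is_strategy (i : N) (s : history -> {set Theta i}) : Prop :=
  (forall h, decnode i h -> s h \in acts g i h) /\
  (forall h h', info g i h h' -> s h = s h').

Definition is_profile (s : sprofile) : Prop := forall i, is_strategy (s i).

Definition plays (s : sprofile) (z : history) : Prop :=
  terminal z /\
  forall k, k < size z -> forall i,
    nth aprof0 z k i = if i \in movers g (take k z) then Some (s i (take k z)) else None.

Definition consistent (M : {set N}) (s : sprofile) (h : history) : Prop :=
  exists s', is_profile s' /\ (forall k, k \in M -> forall h0, s' k h0 = s k h0) /\
    exists z, plays s' z /\ prefix h z.

Definition unconditional (i : N) (t : Theta i) (s : history -> {set Theta i}) : Prop :=
  forall h, decnode i h -> t \in theta_i i h -> t \in s h.

Variable R : forall i : N, Theta i -> X -> X -> Prop.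

Definition incentive_compatible : Prop :=
  forall i (t : Theta i) (s1 s2 : sprofile),
    is_profile s1 -> is_profile s2 ->
    (forall k, k != i -> forall h, s1 k h = s2 k h) ->
    unconditional t (s1 i) ->
    forall z1 z2, plays s1 z1 -> plays s2 z2 -> R t (outcome g z1) (outcome g z2).

(* information set of a precedes information set of b (a, b representatives) *)
Definition iprec (i : N) (a b : history) : Prop :=
  exists a' b', info g i a a' /\ info g i b b' /\ sprefix a' b'.

Definition immediate_succ (i : N) (a b : history) : Prop :=
  iprec i a b /\ ~ exists m, decnode i m /\ iprec i a m /\ iprec i m b.

Definition indifferent_at (f : tprofile -> X) (j : N) (h : history) : Prop :=
  forall th th', in_theta h th -> in_theta h th' -> forall tj : Theta j, R tj (f th) (f th').

Definition indifference_reaction_proof (f : tprofile -> X) : Prop :=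
  forall i j : N, i != j ->
  forall h0 h1 h2, decnode i h0 -> decnode i h1 -> decnode i h2 ->
    immediate_succ i h0 h1 -> immediate_succ i h0 h2 -> ~ info g i h1 h2 ->
    theta_i i h1 = theta_i i h2 ->
    forall s, is_profile s ->
      consistent (setT :\ i :\ j) s h1 -> consistent (setT :\ i :\ j) s h2 ->
      indifferent_at f j h1 \/ indifferent_at f j h2.

End GradualMechanisms.

Definition preferences_ok (N : finType) (Theta : N -> finType) (X : finType)
  (R : forall i : N, Theta i -> X -> X -> Prop) : Prop :=
  forall i (t : Theta i),
    (forall x y, R i t x y \/ R i t y x) /\
    (forall x y z, R i t x y -> R i t y z -> R i t x z).

Definition strategy_proof (N : finType) (Theta : N -> finType) (X : finType)
  (R : forall i : N, Theta i -> X -> X -> Prop) (f : tprofile Theta -> X) : Prop :=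
  forall i (th th' : tprofile Theta), (forall k, k != i -> th k = th' k) ->
    R i (th i) (f th) (f th').

(* Main.v *)
Require Import Defs.
From mathcomp Require Import all_boot zify.
From Stdlib Require List Classical.

Set Implicit Arguments.
Unset Strict Implicit.
Unset Printing Implicit Defensive.

Section Aux.
Variables (N : finType) (Theta : N -> finType) (X : finType) (G : game Theta X)
  (f : tprofile Theta -> X).
Hypothesis HGM : is_GM G f.
Let GF := gm_game_form HGM.

Definition C (z : history Theta) (m : N) (n : nat) :=
  count (fun k => m \in movers G (take k z)) (iota 0 n).

Lemma C_S z m n : C z m n.+1 = C z m n + (m \in movers G (take n z)).
Proof. by rewrite /C -addn1 iotaD count_cat /= addn0. Qed.

Lemma C_mono z m a b : a <= b -> C z m a <= C z m b.
Proof.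
move=> /subnK <-; elim: (b - a) => [|k IH] //=.
by rewrite addSn C_S (leq_trans IH) // leq_addr.
Qed.

Lemma size_exp m h :
  size (experience G m h) = count (fun k => m \in movers G (take k h)) (iota 0 (size h)).
Proof. by rewrite /experience size_map size_filter. Qed.

Lemma exp_take z m n : n <= size z -> size (experience G m (take n z)) = C z m n.
Proof.
move=> hn; rewrite size_exp size_takel // /C.
apply: eq_in_count => k; rewrite mem_iota /= add0n => hk.
by rewrite take_takel // ltnW.
Qed.

Lemma hist_take z n : hist G z -> hist G (take n z).
Proof.
elim/last_ind: z n => [|z a IH] n H; first by case: n.
have Hz := gf_prefix_closed GF H.
case: (leqP n (size z)) => hn.
  by rewrite -cats1 takel_cat //; apply: IH.
by rewrite take_oversize // size_rcons.
Qed.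

Lemma decnode_take z m n : hist G z -> n < size z -> m \in movers G (take n z) ->
  decnode G m (take n z).
Proof.
move=> H hn hm; split=> //; split; first exact: hist_take.
exists (nth (@aprof0 N Theta) z n); rewrite -take_nth //; exact: hist_take.
Qed.

Lemma theta_S m z n : n < size z ->
  theta_i m (take n.+1 z) = if nth (@aprof0 N Theta) z n m is Some x then x else theta_i m (take n z).
Proof. by move=> hn; rewrite (take_nth (@aprof0 N Theta)) // /theta_i foldl_rcons. Qed.

Lemma theta_play m s z n : plays G s z -> n < size z ->
  theta_i m (take n.+1 z) = if m \in movers G (take n z) then s m (take n z) else theta_i m (take n z).
Proof.
move=> [_ Hp] hn; rewrite theta_S // Hp //.
by case: (m \in movers G (take n z)).
Qed.


Lemma acts_sub m h x : decnode G m h -> x \in acts G m h -> x \subset theta_i m h.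
Proof.
move=> Hd Hx; rewrite -(gm_acts_cover HGM Hd).
exact: (bigcup_sup (F := id) x Hx).
Qed.

Lemma prev_node z m a k : C z m a = k.+1 ->
  exists b, [/\ b < a, m \in movers G (take b z), C z m b = k & C z m b.+1 = k.+1].
Proof.
elim: a => [|a IH] //; rewrite C_S.
case hm: (m \in movers G (take a z)).
  rewrite addn1 => -[hk]; exists a; split => //; by rewrite C_S hm hk addn1.
rewrite addn0 => /IH [b [h1 h2 h3 h4]]; exists b; split => //; exact: ltnW.
Qed.

Lemma node_at z m a k : k < C z m a ->
  exists b, [/\ b < a, m \in movers G (take b z) & C z m b = k].
Proof.
elim: a => [|a IH] //; rewrite C_S.
case: (ltnP k (C z m a)) => hk.
  by move=> _; have [b [h1 h2 h3]] := IH hk; exists b; split => //; exact: ltnW.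
case hm: (m \in movers G (take a z)); last by rewrite addn0 => h; lia.
rewrite addn1 ltnS => hk'; exists a; split => //; lia.
Qed.

Lemma C_root z m b : C z m b = 0 -> b = 0.
Proof.
case: b => // b h.
have h1 : C z m 1 = 1 by rewrite C_S take0 (gf_root_movers GF) inE.
have := C_mono z m (ltn0Sn b); rewrite h h1 //.
Qed.

Lemma size_len T (l : seq T) : size l = List.length l.
Proof. by elim: l => //= x l ->. Qed.

Lemma cnt_info m h h' : info G m h h' ->
  size (experience G m h) = size (experience G m h').
Proof.
move=> /(gf_perfect_recall GF) /List.Forall2_length.
by rewrite !size_len.
Qed.

Lemma cnt_sprefix m a b : m \in movers G a -> sprefix a b ->
  size (experience G m a) < size (experience G m b).
Proof.
move=> hm [t [ht ->]]; rewrite !size_exp size_cat iotaD count_cat add0n.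
have -> : count (fun k => m \in movers G (take k (a ++ t))) (iota 0 (size a)) =
          count (fun k => m \in movers G (take k a)) (iota 0 (size a)).
  apply: eq_in_count => k; rewrite mem_iota add0n /= => hk.
  by rewrite takel_cat // ltnW.
case: t ht => // x t _ /=.
by rewrite take_size_cat // hm /= addnS ltnS leq_addr.
Qed.

Lemma iprec_lt m x y : iprec G m x y ->
  size (experience G m x) < size (experience G m y).
Proof.
move=> [x' [y' [hx [hy hp]]]].
rewrite (cnt_info hx) (cnt_info hy).
apply: cnt_sprefix hp.
by have [_ [_ ]] := gf_info_dom GF hx.
Qed.

Lemma no_between m h0 h1 :
  size (experience G m h1) = (size (experience G m h0)).+1 ->
  ~ exists M, decnode G m M /\ iprec G m h0 M /\ iprec G m M h1.
Proof.
move=> he [M [_ [/iprec_lt h1' /iprec_lt h2']]]; lia.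
Qed.

Record W (z z' : history Theta) (m : N) (a a' b b' : nat) : Prop := MkW {
  w_a : a < size z; w_a' : a' < size z'; w_b : b < a; w_b' : b' < a';
  w_ma : m \in movers G (take a z); w_ma' : m \in movers G (take a' z');
  w_mb : m \in movers G (take b z); w_mb' : m \in movers G (take b' z');
  w_Ca : C z m a = (C z m b).+1; w_Ca' : C z' m a' = (C z' m b').+1;
  w_info : info G m (take b z) (take b' z');
  w_ninfo : ~ info G m (take a z) (take a' z') }.

Lemma W_sym z z' m a a' b b' : W z z' m a a' b b' -> W z' z m a' a b' b.
Proof.
case=> *; split => //; first exact: (gf_info_sym GF).
by move/(gf_info_sym GF).
Qed.

Lemma diverge z z' m : hist G z -> hist G z' -> forall k n n',
  n < size z -> n' < size z' -> m \in movers G (take n z) -> m \in movers G (take n' z') ->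
  C z m n = k -> C z' m n' = k ->
  info G m (take n z) (take n' z') \/
  exists a a' b b', [/\ W z z' m a a' b b', a <= n & a' <= n'].
Proof.
move=> Hz Hz'; elim=> [|k IH] n n' hn hn' hm hm' hC hC'.
  move: (C_root hC) (C_root hC') => e e'; subst n n'; left.
  rewrite !take0; apply: (gf_info_refl GF).
  by have := decnode_take Hz hn hm; rewrite take0.
have [b [hb1 hb2 hb3 hb4]] := prev_node hC.
have [b' [hb1' hb2' hb3' hb4']] := prev_node hC'.
have [Hi|[a [a' [c [c' [hw ha ha']]]]]] :=
  IH b b' (ltn_trans hb1 hn) (ltn_trans hb1' hn') hb2 hb2' hb3 hb3'.
  case: (Classical_Prop.classic (info G m (take n z) (take n' z'))) => Hn; first by left.
  right; exists n, n', b, b'; split => //; split => //; by rewrite ?hC ?hC' ?hb3 ?hb3'.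
right; exists a, a', c, c'; split => //.
  exact: (leq_trans ha (ltnW hb1)).
exact: (leq_trans ha' (ltnW hb1')).
Qed.

Section Play.
Variables (s : sprofile Theta) (z : history Theta).
Hypotheses (Hs : is_profile G s) (Hz : plays G s z).

Lemma hz : hist G z. Proof. by case: Hz => [[]]. Qed.

Lemma theta_step m n : n < size z -> theta_i m (take n.+1 z) \subset theta_i m (take n z).
Proof.
move=> hn; rewrite (theta_play _ Hz) //.
case: ifP => // hm.
have Hd := decnode_take hz hn hm.
apply: acts_sub => //; exact: (proj1 (Hs m)).
Qed.

Lemma theta_mono m a b : a <= b -> b <= size z ->
  theta_i m (take b z) \subset theta_i m (take a z).
Proof.
move=> /subnK <-; elim: (b - a) => [|k IH] hb; first by rewrite add0n subxx.
rewrite addSn in hb *; exact: subset_trans (theta_step _ hb) (IH (ltnW hb)).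
Qed.

Lemma theta_ne (inh : forall k, exists x : Theta k, true) m n :
  n <= size z -> exists x, x \in theta_i m (take n z).
Proof.
elim: n => [|n IH] hn.
  by have [x _] := inh m; exists x; rewrite take0 /theta_i /= inE.
rewrite (theta_play _ Hz) //; case: ifP => [hm|_]; last exact: IH (ltnW hn).
have Hd := decnode_take hz hn hm.
have Ha := proj1 (Hs m) _ Hd.
by have /set0Pn := gm_acts_nonempty HGM Hd Ha.
Qed.

Lemma theta_flat m c a : c <= a -> a <= size z -> C z m a = C z m c ->
  theta_i m (take a z) = theta_i m (take c z).
Proof.
move=> /subnK <-; elim: (a - c) => [|k IH] //= ha hC.
rewrite addSn in ha hC *.
have h1 := C_mono z m (leq_addl k c).
rewrite C_S in hC.
rewrite (theta_play _ Hz) //.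
case: ifP => hm; rewrite hm in hC; first by move: hC h1 => /=; lia.
apply: IH (ltnW ha) _; move: hC; rewrite addn0 //.
Qed.

Lemma theta_last m b a : b < a -> a <= size z -> m \in movers G (take b z) ->
  C z m a = (C z m b).+1 -> theta_i m (take a z) = s m (take b z).
Proof.
move=> hba ha hm hC.
rewrite (theta_flat hba ha); last by rewrite C_S hm addn1.
by rewrite (theta_play _ Hz) ?hm // (leq_trans hba).
Qed.

End Play.
Section Two.
Variables (s s' : sprofile Theta) (z z' : history Theta) (m : N).
Hypotheses (Hs : is_profile G s) (Hz : plays G s z) (Hs' : is_profile G s') (Hz' : plays G s' z').
Hypothesis (Hsm : forall h, s m h = s' m h).
Hypothesis inh : forall k, exists x : Theta k, true.

Lemma sep P P' : P <= size z -> P' <= size z' -> C z m P <= C z' m P' ->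
  theta_i m (take P z) :&: theta_i m (take P' z') = set0 ->
  exists a a' b b', [/\ W z z' m a a' b b', a < P & a' < P'].
Proof.
move=> hP hP' hle hI.
have [x hx] := theta_ne Hs' Hz' inh m hP'.
case hk: (C z m P) hle => [|k] hle.
  move: hI; rewrite (theta_flat Hz (leq0n P) hP) ?hk // take0 /theta_i /= setTI => e.
  by move: hx; rewrite /theta_i e inE.
have [b [hb1 hb2 hb3 hb4]] := prev_node hk.
have [b' [hb1' hb2' hb3']] := node_at (k := k) (z := z') (m := m) (a := P') hle.
have [Hi|[a [a' [c [c' [hw ha ha']]]]]] :=
  diverge (hz Hz) (hz Hz') (leq_trans hb1 hP) (leq_trans hb1' hP') hb2 hb2' hb3 hb3'.
  exfalso.
  have e1 : theta_i m (take P z) = s m (take b z).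
    by apply: (theta_last Hz hb1 hP hb2); rewrite hk hb3.
  have e2 : theta_i m (take b'.+1 z') = s' m (take b' z').
    by rewrite (theta_play _ Hz') ?hb2' // (leq_trans hb1' hP').
  have e3 : s m (take b z) = s' m (take b' z').
    by rewrite -Hsm; apply: (proj2 (Hs m)).
  have hsub := theta_mono Hs' Hz' m hb1' hP'.
  move: hI; rewrite e1 e3 -e2 (setIidPr hsub) => e.
  by move: hx; rewrite e inE.
exists a, a', c, c'; split => //.
  exact: (leq_ltn_trans ha hb1).
exact: (leq_ltn_trans ha' hb1').
Qed.

End Two.

Lemma sprefix_take (z : history Theta) b a : b < a -> a <= size z ->
  sprefix (take b z) (take a z).
Proof.
move=> hba ha; exists (drop b (take a z)); split.
  move/(congr1 size); rewrite size_drop size_takel //= => /eqP; by rewrite subn_eq0 leqNgt hba.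
by rewrite -{1}(take_takel z (ltnW hba)) cat_take_drop.
Qed.

Definition upd (th : tprofile Theta) (d : N) (x : Theta d) : tprofile Theta :=
  fun k => match d =P k with ReflectT e => eq_rect d Theta x k e | ReflectF _ => th k end.

Lemma upd_eq th d (x : Theta d) : upd th x d = x.
Proof.
rewrite /upd; case: (d =P d) => [e|]; last by [].
by rewrite (eq_irrelevance e erefl).
Qed.

Lemma upd_neq th d (x : Theta d) k : k != d -> upd th x k = th k.
Proof.
rewrite /upd => hk; case: (d =P k) => // e.
by exfalso; move: hk; rewrite -e eqxx.
Qed.

Lemma theta_pick s z (inh : forall k, exists x : Theta k, true) :
  is_profile G s -> plays G s z -> exists th, in_theta z th.
Proof.
move=> Hs Hz.
have ex k : exists x, x \in theta_i k z.
  by have := theta_ne Hs Hz inh k (leqnn (size z)); rewrite take_size.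
by exists (fun k => xchoose (ex k)) => k; exact: xchooseP.
Qed.

Section Main.
Variable R : forall i : N, Theta i -> X -> X -> Prop.
Hypotheses (Hpref : preferences_ok R) (Hsp : strategy_proof R f)
  (Hirp : indifference_reaction_proof G R f).
Variables (d : N) (t : Theta d) (s1 s2 : sprofile Theta) (z1 z2 : history Theta).
Hypotheses (Hs1 : is_profile G s1) (Hs2 : is_profile G s2)
  (Hag : forall k, k != d -> forall h, s1 k h = s2 k h)
  (Hunc : unconditional G t (s1 d)) (Hz1 : plays G s1 z1) (Hz2 : plays G s2 z2).
Hypothesis inh : forall k, exists x : Theta k, true.

Lemma Rrefl x : R t x x.
Proof. by case: ((proj1 (Hpref t)) x x). Qed.

Lemma Rtrans x y w : R t x y -> R t y w -> R t x w.
Proof. exact: (proj2 (Hpref t)). Qed.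

Lemma t_in P : P <= size z1 -> t \in theta_i d (take P z1).
Proof.
elim: P => [|P IH] hP; first by rewrite take0 /theta_i /= inE.
rewrite (theta_play _ Hz1) //; case: ifP => hm; last exact: IH (ltnW hP).
apply: Hunc; [exact: decnode_take (hz Hz1) hP hm | exact: IH (ltnW hP)].
Qed.

Lemma irp_step m a a' b b' : m != d -> W z1 z2 m a a' b b' ->
  indifferent_at R f d (take a z1) \/ indifferent_at R f d (take a' z2).
Proof.
move=> hmd [ha ha' hb hb' hma hma' hmb hmb' hCa hCa' hi hni].
have Hd0 := decnode_take (hz Hz1) (ltn_trans hb ha) hmb.
have Hd1 := decnode_take (hz Hz1) ha hma.
have Hd2 := decnode_take (hz Hz2) ha' hma'.
have Hd0' := decnode_take (hz Hz2) (ltn_trans hb' ha') hmb'.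
apply: (Hirp hmd Hd0 Hd1 Hd2 _ _ hni _ Hs1).
- split.
    exists (take b z1), (take a z1); split; first exact: (gf_info_refl GF).
    split; first exact: (gf_info_refl GF).
    exact: sprefix_take hb (ltnW ha).
  apply: no_between; rewrite !exp_take ?hCa //; lia.
- split.
    exists (take b' z2), (take a' z2); split => //.
    split; first exact: (gf_info_refl GF).
    exact: sprefix_take hb' (ltnW ha').
  apply: no_between; rewrite (cnt_info hi) !exp_take ?hCa' //; lia.
- rewrite (theta_last Hz1 hb (ltnW ha) hmb hCa) (theta_last Hz2 hb' (ltnW ha') hmb' hCa').
  rewrite -Hag //; exact: (proj2 (Hs1 m)).
- exists s1; split => //; split => //; exists z1; split => //.
  by exists (drop a z1); rewrite cat_take_drop.
- exists s2; split => //; split.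
    move=> k; rewrite !inE => /andP [hkd _] h0; apply/esym/Hag => //.
  by exists z2; split => //; exists (drop a' z2); rewrite cat_take_drop.
Qed.

Definition Inv1 P := forall th, in_theta (take P z1) th -> R t (outcome G z1) (f th).
Definition Inv2 P := forall th, in_theta (take P z2) th -> R t (f th) (outcome G z2).

Lemma iter n : forall P1 P2, P1 + P2 < n -> P1 <= size z1 -> P2 <= size z2 ->
  Inv1 P1 -> Inv2 P2 -> R t (outcome G z1) (outcome G z2).
Proof.
elim: n => [|n IH] P1 P2 // hn hP1 hP2 I1 I2.
case: (boolP [exists k, (k != d) && (theta_i k (take P1 z1) :&: theta_i k (take P2 z2) == set0)]).
  case/existsP => m /andP [hmd /eqP hI].
  have [a [a' [b [b' [hw ha ha']]]]] :
      exists a a' b b', [/\ W z1 z2 m a a' b b', a < P1 & a' < P2].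
    case: (leqP (C z1 m P1) (C z2 m P2)) => hle.
      apply: (sep Hs1 Hz1 Hs2 Hz2 _ inh hP1 hP2 hle hI).
      by move=> h; apply: Hag.
    have hI' : theta_i m (take P2 z2) :&: theta_i m (take P1 z1) = set0 by rewrite setIC.
    have [a' [a [b' [b [hw ha' ha]]]]] :=
      sep Hs2 Hz2 Hs1 Hz1 (m := m) (fun h => esym (Hag hmd h)) inh hP2 hP1 (ltnW hle) hI'.
    by exists a, a', b, b'; split => //; apply: W_sym.
  have [th0 Hth0] := theta_pick inh Hs1 Hz1.
  have [th2 Hth2] := theta_pick inh Hs2 Hz2.
  case: (irp_step hmd hw) => Hind.
    apply: (IH a P2) => //; first lia; first exact: ltnW (leq_trans ha hP1).
    move=> th Hth.
    rewrite (gm_implements HGM (proj1 Hz1) Hth0).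
    apply: Hind => // k.
    by apply: (subsetP (theta_mono Hs1 Hz1 k (ltnW (leq_trans ha hP1)) (leqnn _))); rewrite take_size.
  apply: (IH P1 a') => //; first lia; first exact: ltnW (leq_trans ha' hP2).
  move=> th Hth.
  rewrite (gm_implements HGM (proj1 Hz2) Hth2).
  apply: Hind => // k.
  by apply: (subsetP (theta_mono Hs2 Hz2 k (ltnW (leq_trans ha' hP2)) (leqnn _))); rewrite take_size.
rewrite negb_exists => /forallP Hall.
have ex k : exists x, (x \in theta_i k (take P2 z2)) && ((k != d) ==> (x \in theta_i k (take P1 z1))).
  case: (eqVneq k d) => [->|hkd].
    have [x hx] := theta_ne Hs2 Hz2 inh d hP2; exists x; by rewrite hx.
  have := Hall k; rewrite hkd /= => /set0Pn [x]; rewrite inE => /andP [h1 h2].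
  by exists x; rewrite h1 h2.
pose th2 : tprofile Theta := fun k => xchoose (ex k).
pose th1 := upd th2 t.
have H2 : in_theta (take P2 z2) th2 by move=> k; case/andP: (xchooseP (ex k)).
have H1 : in_theta (take P1 z1) th1.
  move=> k; case: (eqVneq k d) => [->|hkd].
    by rewrite /th1 upd_eq; apply: t_in.
  rewrite /th1 upd_neq //; case/andP: (xchooseP (ex k)) => _ /implyP; apply; exact: hkd.
have Hsp' := Hsp (th := th1) (th' := th2) (fun k hk => upd_neq th2 t hk).
rewrite /th1 upd_eq in Hsp'.
exact: Rtrans (I1 _ H1) (Rtrans Hsp' (I2 _ H2)).
Qed.

End Main.

End Aux.

Theorem theorem3 (N : finType) (Theta : N -> finType) (X : finType)
  (R : forall i : N, Theta i -> X -> X -> Prop) (f : tprofile Theta -> X)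
  (G : game Theta X) :
  preferences_ok R ->
  strategy_proof R f ->
  is_GM G f ->
  indifference_reaction_proof G R f ->
  incentive_compatible G R.
Proof.
move=> Hpref Hsp HGM Hirp d t s1 s2 Hs1 Hs2 Hag Hunc z1 z2 Hz1 Hz2.
have GF := gm_game_form HGM.
have Rrefl x : R d t x x by case: ((proj1 (Hpref d t)) x x).
case E: z1 => [|x1 r1].
  have E2 : z2 = [::].
    case E2: z2 => [|x2 r2] //; exfalso.
    have := hist_take HGM 1 (proj1 (proj1 Hz2)); rewrite E2 /= => H.
    move: H; rewrite take0 => H; case: (proj1 Hz1) => _ Hn; apply: Hn; exists x2; by rewrite E.
  by rewrite E2.
have inh k : exists x : Theta k, true.
  have h0 : 0 < size z1 by rewrite E.
  have hm : k \in movers G (take 0 z1) by rewrite take0 (gf_root_movers GF) inE.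
  have Hd := decnode_take HGM (proj1 (proj1 Hz1)) h0 hm.
  have := gm_acts_nonempty HGM Hd (proj1 (Hs1 k) _ Hd).
  by case/set0Pn => x _; exists x.
rewrite -E.
apply: (iter HGM Hpref Hsp Hirp Hs1 Hs2 Hag Hunc Hz1 Hz2 inh (n := (size z1 + size z2).+1)
          (P1 := size z1) (P2 := size z2)) => //.
  move=> th; rewrite take_size => Hth; rewrite (gm_implements HGM (proj1 Hz1) Hth); exact: Rrefl.
move=> th; rewrite take_size => Hth; rewrite (gm_implements HGM (proj1 Hz2) Hth); exact: Rrefl.
Qed.
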